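(* Let $q$ be a prime power, $m\ge1$, $g_1,\dots,g_n\in\mathbb{F}_{q^m}$ linearly independent over $\mathbb{F}_q$, $r_1,\dots,r_n\in\mathbb{F}_{q^m}$, and for $0\le i\le n$ let $\mathfrak M_i$ be the interpolation module for $(g_1,\dots,g_i)$ and $(r_1,\dots,r_i)$ (defined in the context). Let $1\le i\le n$ and let $P,K,N,D\in\mathcal{L}_q(x,q^m)$ be such that the rows $[P(x)\ \ -K(x)]$ and $[N(x)\ \ -D(x)]$ form a basis of $\mathfrak M_{i-1}$. Put $\Gamma_i:=P(g_i)-K(r_i)$ and $\Delta_i:=N(g_i)-D(r_i)$. If $\Gamma_i\neq0$, then the rows of $$\begin{bmatrix}x^q-\Gamma_i^{q-1}x&0\\\Delta_ix&-\Gamma_ix\end{bmatrix}\circ\begin{bmatrix}P(x)&-K(x)\\N(x)&-D(x)\end{bmatrix}$$ form a basis of $\mathfrak M_i$. If $\Delta_i\neq0$, then the rows of $$\begin{bmatrix}\Delta_ix&-\Gamma_ix\\0&x^q-\Delta_i^{q-1}x\end{bmatrix}\circ\begin{bmatrix}P(x)&-K(x)\\N(x)&-D(x)\end{bmatrix}$$ form a basis of $\mathfrak M_i$.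
   Context: Write $[i]:=q^i$. A $q$-linearized polynomial is $f(x)=\sum_{j=0}^{d}a_jx^{[j]}$, $a_j\in\mathbb{F}_{q^m}$; $\mathcal{L}_q(x,q^m)$ is the ring of these under addition and composition $\circ$. For $\mathbb{F}_q$-linearly independent $g_1,\dots,g_i$, $\Pi_i(x):=\prod_{u\in\langle g_1,\dots,g_i\rangle}(x-u)$ ($\mathbb{F}_q$-span), which lies in $\mathcal{L}_q(x,q^m)$, and $\Lambda_i(x):=\sum_{l=1}^i(-1)^{i-l}r_l\det(\mathfrak D_l)/\det(M_i(g_1,\dots,g_i))$, where $M_i(v_1,\dots,v_s)$ is the $i\times s$ matrix with $(j,l)$ entry $v_l^{[j-1]}$ and $\mathfrak D_l$ is $M_i(g_1,\dots,g_i,x)$ with the $l$-th column removed; $\Lambda_i\in\mathcal{L}_q(x,q^m)$ and $\Lambda_i(g_l)=r_l$ for $l\le i$. $\mathcal{L}_q(x,q^m)^2$ is a left module via $h\circ[f_1\ f_2]=[h\circ f_1\ \ h\circ f_2]$. The interpolation module $\mathfrak M_i$ is the set of all $\beta\circ[\Pi_i(x)\ \ 0]+\gamma\circ[-\Lambda_i(x)\ \ x]$ with $\beta,\gamma\in\mathcal{L}_q(x,q^m)$; for $i=0$ we use $\Pi_0(x)=x$, $\Lambda_0=0$, so $\mathfrak M_0=\mathcal{L}_q(x,q^m)^2$. A basis of a submodule is a generating set $\{f^{(1)},\dots,f^{(s)}\}$ such that $\sum a_l\circ f^{(l)}=0$ with $a_l\in\mathcal{L}_q(x,q^m)$ implies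 all $a_l=0$. Composition of a $2\times2$ matrix with a $2\times2$ matrix over $\mathcal{L}_q(x,q^m)$ is defined like matrix multiplication with products replaced by composition. *)

(* Defs.v *)
From HB Require Import structures.
From mathcomp Require Import all_boot all_order all_algebra all_field.
Set Implicit Arguments. Unset Strict Implicit. Unset Printing Implicit Defensive.
Import Order.TTheory GRing.Theory.
Local Open Scope ring_scope.

Section LinPoly.
Variable F : finFieldType.

Definition linearized (q : nat) (f : {poly F}) : Prop :=
  forall j : nat, f`_j != 0 -> exists k : nat, j = (q ^ k)%N.

Definition pair2 := ({poly F} * {poly F})%type.

Definition act (h : {poly F}) (v : pair2) : pair2 := (h \Po v.1, h \Po v.2).

Definition addp (u v : pair2) : pair2 := (u.1 + v.1, u.2 + v.2).

(* row [a b] o [[u];[v]]  (one row of a 2x2 matrix composition) *)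
Definition row_comp (a b : {poly F}) (u v : pair2) : pair2 :=
  addp (act a u) (act b v).

Definition Fq_span (q i : nat) (g : nat -> F) : {set F} :=
  [set u : F | [exists c : {ffun 'I_i -> F},
      [forall l, c l ^+ q == c l] && (u == \sum_(l < i) c l * g l)]].

Definition Pi (q i : nat) (g : nat -> F) : {poly F} :=
  \prod_(u in Fq_span q i g) ('X - u%:P).

(* Moore matrix M_i(g_1,...,g_i), (j,l) entry g_l^[j-1] (0-indexed here) *)
Definition Moore (q i : nat) (g : nat -> F) : 'M[F]_i :=
  \matrix_(j < i, c < i) (g c ^+ (q ^ j)).

(* D_l : M_i(g_1,...,g_i,x) with the (l+1)-th column removed (l 0-indexed) *)
Definition Dmx (q i : nat) (g : nat -> F) (l : nat) : 'M[{poly F}]_i :=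
  \matrix_(j < i, c < i)
    (if (c < l)%N then (g c ^+ (q ^ j))%:P
     else if (c.+1 < i)%N then (g c.+1 ^+ (q ^ j))%:P
     else 'X ^+ (q ^ j)).

Definition Lambda (q i : nat) (g r : nat -> F) : {poly F} :=
  (\det (Moore q i g))^-1 *:
    \sum_(l < i) ((-1) ^+ (i - l.+1) * r l) *: \det (Dmx q i g l).

Definition interp_module (q i : nat) (g r : nat -> F) (v : pair2) : Prop :=
  exists beta gamma : {poly F}, linearized q beta /\ linearized q gamma /\
    v = addp (act beta (Pi q i g, 0)) (act gamma (- Lambda q i g r, 'X)).

Definition is_basis2 (q : nat) (S : pair2 -> Prop) (u v : pair2) : Prop :=
  (forall w, S w <-> exists a b : {poly F}, linearized q a /\ linearized q b /\
                        w = addp (act a u) (act b v)) /\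
  (forall a b : {poly F}, linearized q a -> linearized q b ->
     addp (act a u) (act b v) = (0, 0) -> a = 0 /\ b = 0).

End LinPoly.

(* Main.v *)
Require Import Defs.
From HB Require Import structures.
From mathcomp Require Import all_boot all_order all_algebra all_field.
Import GRing.Theory.
Local Open Scope ring_scope.
Unset Printing Implicit Defensive.


Section Lin.
Variable F : finFieldType.
Variable q : nat.
Hypothesis qchar : [pchar F].-nat q.
Hypothesis q_gt1 : (1 < q)%N.

Notation lin := (@linearized F q).

Lemma qk_gt0 k : (0 < q ^ k)%N.
Proof. by rewrite expn_gt0 (ltnW q_gt1). Qed.

Lemma qk_nat k : [pchar F].-nat (q ^ k)%N.
Proof. by rewrite pnatX qchar. Qed.

Lemma qk_natP k : [pchar {poly F}].-nat (q ^ k)%N.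
Proof. by rewrite (eq_pnat _ (@pchar_poly F)) qk_nat. Qed.

Lemma frobD (x y : F) k : (x + y) ^+ (q ^ k)%N = x ^+ (q ^ k)%N + y ^+ (q ^ k)%N.
Proof. exact: exprDn_pchar (qk_nat k). Qed.

Lemma frobDP (x y : {poly F}) k : (x + y) ^+ (q ^ k)%N = x ^+ (q ^ k)%N + y ^+ (q ^ k)%N.
Proof. exact: exprDn_pchar (qk_natP k). Qed.

Lemma frobN (x : F) k : (- x) ^+ (q ^ k)%N = - x ^+ (q ^ k)%N.
Proof.
apply/eqP; rewrite -subr_eq0 opprK addrC -frobD subrr expr0n.
by rewrite eqn0Ngt qk_gt0.
Qed.

Lemma frobNP (x : {poly F}) k : (- x) ^+ (q ^ k)%N = - x ^+ (q ^ k)%N.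
Proof.
apply/eqP; rewrite -subr_eq0 opprK addrC -frobDP subrr expr0n.
by rewrite eqn0Ngt qk_gt0.
Qed.

Lemma frob_sumP I (r : seq I) (P : pred I) (f : I -> {poly F}) k :
  (\sum_(i <- r | P i) f i) ^+ (q ^ k)%N = \sum_(i <- r | P i) f i ^+ (q ^ k)%N.
Proof.
elim/big_rec2: _ => [|i a b _ <-]; last by rewrite frobDP.
by rewrite expr0n eqn0Ngt qk_gt0.
Qed.

Lemma frob_fix (c : F) k : c ^+ q = c -> c ^+ (q ^ k)%N = c.
Proof.
move=> hc; elim: k => [|k IH]; first by rewrite expn0 expr1.
by rewrite expnSr exprM IH hc.
Qed.

Lemma lin_coef f j : lin f -> f`_j != 0 -> exists k, j = (q ^ k)%N%N.
Proof. by move=> H; apply: H. Qed.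

Lemma lin0 : lin 0.
Proof. by move=> j; rewrite coef0 eqxx. Qed.

Lemma linD f h : lin f -> lin h -> lin (f + h).
Proof.
move=> Hf Hh j; rewrite coefD; have [/Hf //|] := boolP (f`_j != 0).
by rewrite negbK => /eqP ->; rewrite add0r => /Hh.
Qed.

Lemma linN f : lin f -> lin (- f).
Proof. by move=> Hf j; rewrite coefN oppr_eq0 => /Hf. Qed.

Lemma linB f h : lin f -> lin h -> lin (f - h).
Proof. by move=> Hf Hh; apply: linD => //; apply: linN. Qed.

Lemma linZ c f : lin f -> lin (c *: f).
Proof.
move=> Hf j; rewrite coefZ; have [->|] := eqVneq c 0; first by rewrite mul0r eqxx.
by move=> _; rewrite mulf_eq0 negb_or => /andP[_ /Hf].
Qed.

Lemma lin_sum I (r : seq I) (P : pred I) (f : I -> {poly F}) :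
  (forall i, P i -> lin (f i)) -> lin (\sum_(i <- r | P i) f i).
Proof.
by move=> H; elim/big_rec: _ => [|i x Pi Hx]; [exact: lin0 | apply: linD => //; apply: H].
Qed.

Lemma linXn k : lin ('X^(q ^ k)%N).
Proof.
move=> j; rewrite coefXn; have [->|ne] := eqVneq j (q ^ k)%N; first by exists k.
by rewrite eqxx.
Qed.

Lemma linX : lin 'X.
Proof. by have := linXn 0; rewrite expn0 expr1. Qed.

Lemma linZX c : lin (c *: 'X).
Proof. exact/linZ/linX. Qed.

Lemma lin_coef0 f : lin f -> f`_0 = 0.
Proof.
move=> Hf; apply/eqP; apply: contraT => /Hf [k] hk.
by have := qk_gt0 k; rewrite -hk.
Qed.

Lemma lin_term f (P : nat -> Prop) : lin f -> (forall k, P (q ^ k)%N%N) ->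
  forall j, f`_j = 0 \/ P j.
Proof.
move=> Hf HP j; have [/Hf [k ->]|] := boolP (f`_j != 0); first by right.
by rewrite negbK => /eqP; left.
Qed.

Lemma horner_linD f x y : lin f -> f.[x + y] = f.[x] + f.[y].
Proof.
move=> Hf; rewrite !horner_coef -big_split /=; apply: eq_bigr => j _.
have [->|->] := lin_term _ (fun j => (x + y) ^+ j = x ^+ j + y ^+ j) Hf
  (fun k => frobD x y k) j; first by rewrite !mul0r addr0.
by rewrite mulrDr.
Qed.

Lemma horner_lin0 f : lin f -> f.[0] = 0.
Proof. by move=> Hf; rewrite horner_coef0 lin_coef0. Qed.

Lemma horner_linN f x : lin f -> f.[- x] = - f.[x].
Proof.
move=> Hf; apply/eqP; rewrite -subr_eq0 opprK addrC -horner_linD //.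
by rewrite subrr horner_lin0.
Qed.

Lemma horner_linB f x y : lin f -> f.[x - y] = f.[x] - f.[y].
Proof. by move=> Hf; rewrite horner_linD // horner_linN. Qed.

Lemma horner_linZ f c x : lin f -> c ^+ q = c -> f.[c * x] = c * f.[x].
Proof.
move=> Hf hc; rewrite !horner_coef mulr_sumr; apply: eq_bigr => j _.
have [->|->] := lin_term _ (fun j => (c * x) ^+ j = c * x ^+ j) Hf
  (fun k => etrans (exprMn _ c x) (congr1 (fun z => z * _) (frob_fix c k hc))) j.
  by rewrite !mul0r mulr0.
by rewrite mulrCA.
Qed.

Lemma horner_lin_sum f I (r : seq I) (P : pred I) (h : I -> F) :
  lin f -> f.[\sum_(i <- r | P i) h i] = \sum_(i <- r | P i) f.[h i].
Proof.
move=> Hf; elim/big_rec2: _ => [|i a b _ <-]; first exact: horner_lin0.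
exact: horner_linD.
Qed.

Lemma comp_linD f x y : lin f -> f \Po (x + y) = (f \Po x) + (f \Po y).
Proof.
move=> Hf; rewrite !comp_polyE -big_split /=; apply: eq_bigr => j _.
have [->|->] := lin_term _ (fun j => (x + y) ^+ j = x ^+ j + y ^+ j) Hf
  (fun k => frobDP x y k) j; first by rewrite !scale0r addr0.
by rewrite scalerDr.
Qed.

Lemma comp_lin0 f : lin f -> f \Po 0 = 0.
Proof. by move=> Hf; rewrite comp_poly0r lin_coef0. Qed.

Lemma comp_linN f x : lin f -> f \Po (- x) = - (f \Po x).
Proof.
move=> Hf; apply/eqP; rewrite -subr_eq0 opprK addrC -comp_linD //.
by rewrite subrr comp_lin0.
Qed.

Lemma comp_linB f x y : lin f -> f \Po (x - y) = (f \Po x) - (f \Po y).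
Proof. by move=> Hf; rewrite comp_linD // comp_linN. Qed.

Lemma lin_exp f k : lin f -> lin (f ^+ (q ^ k)%N).
Proof.
move=> Hf; rewrite -[f]coefK poly_def frob_sumP; apply: lin_sum => j _.
rewrite exprZn -exprM.
have [->|[k' ->]] := lin_term _ (fun j => exists k', j = (q ^ k')%N) Hf
  (fun k => ex_intro _ k erefl) j.
  by rewrite expr0n eqn0Ngt qk_gt0 scale0r; exact: lin0.
by rewrite -expnD; apply/linZ/linXn.
Qed.

Lemma lin_comp f h : lin f -> lin h -> lin (f \Po h).
Proof.
move=> Hf Hh; rewrite comp_polyE; apply: lin_sum => j _.
have [->|[k ->]] := lin_term _ (fun j => exists k', j = (q ^ k')%N) Hf
  (fun k => ex_intro _ k erefl) j.
  by rewrite scale0r; exact: lin0.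
by apply/linZ/lin_exp.
Qed.

End Lin.


Section Div.
Variable F : finFieldType.
Variable q : nat.
Hypothesis qchar : [pchar F].-nat q.
Hypothesis q_gt1 : (1 < q)%N.

Notation lin := (@linearized F q).

Lemma compZX (c : F) p : (c *: 'X) \Po p = c *: p.
Proof. by rewrite comp_polyZ comp_polyX. Qed.

Lemma lin_div T s : lin T -> lead_coef T = 1 -> size T = (q ^ s).+1 ->
  forall h, lin h -> exists beta rho, lin beta /\ lin rho /\
    h = (beta \Po T) + rho /\ (size rho <= q ^ s)%N.
Proof.
move=> HT lT sT h.
elim: (size h).+1 {-2}h (ltnSn (size h)) => // nn IH {}h hs Hh.
have [small|big] := leqP (size h) (q ^ s).
  by exists 0, h; rewrite comp_poly0 add0r; split; [exact: lin0|].
have hnz : h != 0 by rewrite -size_poly_gt0 (leq_ltn_trans _ big).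
have ld : h`_(size h).-1 != 0 by rewrite -lead_coefE lead_coef_eq0.
have [t' ht'] := Hh _ ld.
have st : (s <= t')%N.
  rewrite -(leq_exp2l _ _ q_gt1) -ht'; rewrite -ltnS prednK //.
  by rewrite (leq_ltn_trans _ big).
set c := lead_coef h.
set b0 := c *: 'X^(q ^ (t' - s)).
have Tnz : T != 0 by rewrite -lead_coef_eq0 lT oner_eq0.
have Tm : T \is monic by apply/monicP.
have E : b0 \Po T = c *: T ^+ (q ^ (t' - s)) by rewrite comp_polyZ comp_Xn_poly.
have sE : size (T ^+ (q ^ (t' - s))) = size h.
  have nz : T ^+ (q ^ (t' - s)) != 0 by apply/monic_neq0/monic_exp.
  have sz : (0 < size (T ^+ (q ^ (t' - s))))%N by rewrite size_poly_gt0.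
  rewrite -(prednK sz) size_exp sT /= -expnD subnKC //.
  by rewrite -ht' prednK // size_poly_gt0.
have lE : lead_coef (T ^+ (q ^ (t' - s))) = 1 by rewrite lead_coef_exp lT expr1n.
have hs' : (size (h - (b0 \Po T))%R < nn)%N.
  have sz : (0 < size h)%N by rewrite size_poly_gt0.
  suff : (size (h - (b0 \Po T))%R <= (size h).-1)%N.
    by move=> H1; apply: leq_ltn_trans H1 _; rewrite -ltnS prednK.
  apply/leq_sizeP => j hj; rewrite E coefB coefZ.
  move: hj; rewrite leq_eqVlt => /orP[/eqP <-|hj].
    by rewrite -lead_coefE -sE -lead_coefE lE mulr1 /c subrr.
  have hj' : (size h <= j)%N by rewrite -(prednK sz).
  by rewrite !nth_default ?mulr0 ?subr0 // sE.
have lb0 : lin b0 by apply/linZ/linXn.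
have Hh' : lin (h - (b0 \Po T)) by apply: linB => //; apply: lin_comp.
have [b' [rho [lb' [lrho [eqh srho]]]]] := IH _ hs' Hh'.
exists (b' + b0), rho; split; first exact: linD.
split => //; split => //.
by rewrite comp_polyD -addrA (addrC (b0 \Po T)) addrA -eqh subrK.
Qed.

Lemma lin_small rho : lin rho -> (size rho <= q)%N -> rho = rho`_1 *: 'X.
Proof.
move=> Hr sr; apply/polyP => j; rewrite coefZ coefX.
have [->|ne] := eqVneq j 1%N; first by rewrite mulr1.
rewrite mulr0; apply/eqP; apply: contraT => nz; have [k hk] := Hr _ nz.
have : (j < q)%N.
  rewrite ltnNge; apply/negP => hj; move: nz; rewrite nth_default ?eqxx //.
  exact: leq_trans sr hj.
rewrite hk -{2}(expn1 q) ltn_exp2l // ltnS leqn0 => /eqP k0.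
by move: ne; rewrite hk k0 expn0 eqxx.
Qed.

End Div.


Section Span.
Variable F : finFieldType.
Variable q : nat.
Hypothesis qchar : [pchar F].-nat q.
Hypothesis q_gt1 : (1 < q)%N.
Variable m : nat.
Hypothesis cardF : #|F| = (q ^ m)%N.
Variable g : nat -> F.
Variable n : nat.
Hypothesis Hind : forall c : nat -> F, (forall l, (l < n)%N -> c l ^+ q = c l) ->
     \sum_(l < n) c l * g l = 0 -> forall l, (l < n)%N -> c l = 0.

Notation lin := (@linearized F q).
Notation V j := (Fq_span q j g).

Lemma spanP j u : u \in V j <-> exists c : nat -> F,
  (forall l, (l < j)%N -> c l ^+ q = c l) /\ u = \sum_(l < j) c l * g l.
Proof.
rewrite inE; split.
  case/existsP => c /andP[/forallP hc /eqP ->].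
  exists (fun l => odflt 0 (omap c (insub l : option 'I_j))); split.
    move=> l hl; rewrite insubT /=; exact/eqP/hc.
  by apply: eq_bigr => l _; rewrite valK.
case=> c [hc ->]; apply/existsP; exists [ffun l : 'I_j => c l].
apply/andP; split; first by apply/forallP => l; rewrite ffunE hc.
by apply/eqP; apply: eq_bigr => l _; rewrite ffunE.
Qed.

Lemma indep_j j c : (j <= n)%N -> (forall l, (l < j)%N -> c l ^+ q = c l) ->
  \sum_(l < j) c l * g l = 0 -> forall l, (l < j)%N -> c l = 0.
Proof.
move=> jn hc hs l lj.
pose d l := if (l < j)%N then c l else 0.
have h1 : forall l', (l' < n)%N -> d l' ^+ q = d l'.
  move=> l' _; rewrite /d; case: ifP => [/hc //|_].
  by rewrite expr0n gtn_eqF // (ltnW q_gt1).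
have h2 : \sum_(l < n) d l * g l = 0.
  rewrite -[RHS]hs (big_ord_widen n (fun l => c l * g l) jn) [RHS]big_mkcond /=.
  by apply: eq_bigr => l' _; rewrite /d; case: ifP => //; rewrite mul0r.
by have := Hind d h1 h2 l (leq_trans lj jn); rewrite /d lj.
Qed.

Lemma not_in_span j : (j < n)%N -> g j \notin V j.
Proof.
move=> jn; apply/negP => /spanP [c [hc eu]].
pose d l := if (l < j)%N then c l else if l == j then -1 else 0.
have h1 : forall l, (l < j.+1)%N -> d l ^+ q = d l.
  move=> l; rewrite ltnS leq_eqVlt => /orP[/eqP ->|lj]; rewrite /d.
    by rewrite ltnn eqxx; have := frobN _ _ qchar q_gt1 1 1; rewrite expn1 expr1n.
  by rewrite lj hc.
have h2 : \sum_(l < j.+1) d l * g l = 0.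
  rewrite big_ord_recr /= /d ltnn eqxx.
  rewrite (eq_bigr (fun l : 'I_j => c l * g l)); last by move=> l _; rewrite ltn_ord.
  by rewrite -eu mulN1r subrr.
have := indep_j (j.+1) d jn h1 h2 j (ltnSn j).
by rewrite /d ltnn eqxx => /eqP; rewrite oppr_eq0 oner_eq0.
Qed.

Lemma cardFq : #|[set c : F | c ^+ q == c]| = q.
Proof.
have sXq : size ('X^q - 'X : {poly F}) = q.+1.
  by rewrite size_addl size_polyXn // size_opp size_polyX ltnS.
have hdiv : ('X^q - 'X) %| ('X^#|F| - 'X : {poly F}).
  have -> : ('X^#|F| - 'X : {poly F}) = \sum_(0 <= k < m) ('X^q - 'X) ^+ (q ^ k).
    rewrite cardF (telescope_sumr_eq (fun k => 'X^(q ^ k))) ?expn0 ?expr1 //.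
    move=> k _; rewrite frobDP // frobNP // -exprM expnS.
    by rewrite -{1}(expn1 q) -expnD.
  elim/big_ind: _ => [|x y|k _]; first exact: dvdp0.
    exact: dvdp_add.
  by apply: dvdp_exp; [rewrite expn_gt0 (ltnW q_gt1)|exact: dvdpp].
rewrite finField_genPoly in hdiv.
have [msk Heq] := dvdp_prod_XsubC hdiv.
set s := mask msk _ in Heq.
have us : uniq s by apply: mask_uniq; apply: index_enum_uniq.
have ss : size s = q.
  by have := eqp_size Heq; rewrite sXq size_prod_XsubC => -[].
transitivity #|s|; last by rewrite (card_uniqP us) ss.
apply: eq_card => c.
by rewrite inE -(root_prod_XsubC s c) -(eqp_root Heq) rootE !hornerE subr_eq0.
Qed.

Lemma card_span j : (j <= n)%N -> #|V j| = (q ^ j)%N.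
Proof.
move=> jn.
pose C := [set c : {ffun 'I_j -> F} | [forall l, c l ^+ q == c l]].
have -> : V j = [set (\sum_(l < j) c l * g l) | c : {ffun 'I_j -> F} in C].
  apply/setP => u; rewrite inE; apply/existsP/imsetP.
    case=> c /andP[hc /eqP ->]; exists c => //; by rewrite inE.
  by case=> c; rewrite inE => hc ->; exists c; rewrite hc eqxx.
rewrite card_in_imset.
  have := card_ffun_on 'I_j [set c : F | c ^+ q == c].
  rewrite card_ord cardFq => <-; apply: eq_card => c.
  rewrite inE; apply/forallP/ffun_onP => H l; move: (H l); by rewrite inE.
move=> c1 c2; rewrite !inE => /forallP h1 /forallP h2 e12.
apply/ffunP => l.
pose d l := odflt 0 (omap (fun o => c1 o - c2 o) (insub l : option 'I_j)).
have h4 : forall l', (l' < j)%N -> d l' ^+ q = d l'.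
  move=> l' hl'; rewrite /d insubT /=.
  have := frobD _ _ qchar (c1 (Ordinal hl')) (- c2 (Ordinal hl')) 1.
  rewrite expn1 => ->.
  have := frobN _ _ qchar q_gt1 (c2 (Ordinal hl')) 1; rewrite expn1 => ->.
  by rewrite (eqP (h1 _)) (eqP (h2 _)).
have h3 : \sum_(l < j) d l * g l = 0.
  rewrite (eq_bigr (fun o : 'I_j => c1 o * g o - c2 o * g o)); last first.
    by move=> o _; rewrite /d valK /= mulrBl.
  by rewrite sumrB e12 subrr.
have := indep_j j d jn h4 h3 l (ltn_ord l).
by rewrite /d valK /= => /eqP; rewrite subr_eq0 => /eqP.
Qed.

End Span.

From mathcomp Require Import zify.


Section PiSec.
Variable F : finFieldType.
Variable q : nat.
Hypothesis qchar : [pchar F].-nat q.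
Hypothesis q_gt1 : (1 < q)%N.
Variable m : nat.
Hypothesis cardF : #|F| = (q ^ m)%N.
Variable g : nat -> F.
Variable n : nat.
Hypothesis Hind : forall c : nat -> F, (forall l, (l < n)%N -> c l ^+ q = c l) ->
     \sum_(l < n) c l * g l = 0 -> forall l, (l < n)%N -> c l = 0.

Notation lin := (@linearized F q).
Notation V j := (Fq_span q j g).
Notation PI j := (Pi q j g).

Lemma Pi_monic j : PI j \is monic.
Proof. exact: monic_prod_XsubC. Qed.

Lemma Pi_prod j : PI j = \prod_(u <- enum (V j)) ('X - u%:P).
Proof. by rewrite /Pi big_enum. Qed.

Lemma size_Pi j : size (PI j) = #|V j|.+1.
Proof. by rewrite Pi_prod size_prod_XsubC cardE. Qed.

Lemma root_Pi j x : root (PI j) x = (x \in V j).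
Proof. by rewrite Pi_prod root_prod_XsubC mem_enum. Qed.

Lemma Pi_dvd j f : (forall u, u \in V j -> root f u) -> exists Q, f = Q * PI j.
Proof.
move=> H; rewrite Pi_prod; apply: uniq_roots_prod_XsubC.
  by apply/allP => u; rewrite mem_enum; apply: H.
by rewrite uniq_rootsE enum_uniq.
Qed.

Lemma lin_vanish j f : lin f -> (forall l, (l < j)%N -> f.[g l] = 0) ->
  forall u, u \in V j -> f.[u] = 0.
Proof.
move=> Hf H u /spanP [c [hc ->]].
rewrite (horner_lin_sum _ q) //; apply: big1 => l _.
by rewrite (horner_linZ _ q) // ?H // ?mulr0 // hc.
Qed.

Lemma span_decomp j v : v \in V j.+1 ->
  exists w c, w \in V j /\ c ^+ q = c /\ v = w + c * g j.
Proof.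
move=> /spanP [c [hc ->]]; exists (\sum_(l < j) c l * g l), (c j).
split; first by apply/spanP; exists c; split => // l lj; apply: hc; exact: ltnW.
by split; [apply: hc | rewrite big_ord_recr].
Qed.

Lemma Pi0 : PI 0 = 'X.
Proof.
rewrite /Pi; have -> : V 0 = [set 0].
  apply/setP => u; rewrite in_set1; apply/idP/idP.
    by move=> /spanP [c [_ ->]]; rewrite big_ord0.
  by move=> /eqP ->; apply/spanP; exists (fun _ => 0); split => //; rewrite big_ord0.
by rewrite big_set1 subr0.
Qed.

Lemma Pi_step j : (j.+1 <= n)%N -> lin (PI j) ->
  PI j.+1 = ('X^q - ((PI j).[g j] ^+ (q - 1)) *: 'X) \Po PI j.
Proof.
move=> jn HS.
set S := PI j; set a := S.[g j]; set b := a ^+ (q - 1).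
set R := _ \Po S.
have eR : R = S ^+ q - b *: S by rewrite /R comp_polyB comp_Xn_poly compZX.
have sS : size S = (q ^ j).+1 by rewrite size_Pi (card_span _ _ qchar q_gt1 m cardF g n Hind) // ltnW.
have Snz : S != 0 by rewrite -size_poly_gt0 sS.
have Sq_nz : S ^+ q != 0 by apply/monic_neq0/monic_exp/Pi_monic.
have sSq : size (S ^+ q) = (q ^ j.+1).+1.
  have sz : (0 < size (S ^+ q))%N by rewrite size_poly_gt0.
  by rewrite -(prednK sz) size_exp sS /= expnSr.
have lt : (size (- (b *: S)) < size (S ^+ q))%N.
  rewrite size_opp sSq; apply: leq_ltn_trans (size_scale_leq _ _) _.
  by rewrite sS ltnS expnSr ltn_Pmulr // expn_gt0 ltnW.
have sR : size R = (q ^ j.+1).+1 by rewrite eR size_addl.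
have lR : lead_coef R = 1.
  by rewrite eR lead_coefDl // lead_coef_exp (monicP (Pi_monic j)) expr1n.
have Rroot : forall u, u \in V j.+1 -> root R u.
  move=> u /span_decomp [w [c [hw [hc ->]]]].
  apply/rootP; rewrite /R horner_comp.
  rewrite (horner_linD _ q) // (horner_linZ _ q) //.
  have -> : S.[w] = 0 by apply/rootP; rewrite root_Pi.
  rewrite add0r -/a !hornerE exprMn hc /b.
  have -> : a ^+ q = a ^+ (q - 1) * a by rewrite -exprSr subn1 prednK // ltnW.
  by rewrite mulrCA mulrA subrr.
have [Q eQ] := Pi_dvd j.+1 R Rroot.
have sP : size (PI j.+1) = (q ^ j.+1).+1 by rewrite size_Pi (card_span _ _ qchar q_gt1 m cardF g n Hind).
have Pnz : PI j.+1 != 0 by rewrite -size_poly_gt0 sP.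
have Qnz : Q != 0 by apply: contra_eq_neq eQ => ->; rewrite mul0r -size_poly_eq0 sR.
have sQ : size Q = 1%N.
  move: sR; rewrite eQ size_mul // sP addnS /= => /eqP.
  set x := (q ^ j.+1)%N; set y := size Q; move/eqP; lia.
have eQ1 : Q = 1.
  rewrite (size1_polyC (eq_leq sQ)); congr (_%:P).
  move: lR; rewrite eQ lead_coefM (monicP (Pi_monic _)) mulr1 lead_coefE sQ.
  by [].
by rewrite eQ eQ1 mul1r.
Qed.

Lemma Pi_lin j : (j <= n)%N -> lin (PI j) /\ size (PI j) = (q ^ j).+1.
Proof.
move=> jn; split; last by rewrite size_Pi (card_span _ _ qchar q_gt1 m cardF g n Hind).
elim: j jn => [|j IH] jn; first by rewrite Pi0; exact: linX.
have IH' := IH (ltnW jn).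
rewrite (Pi_step j jn IH').
apply: (lin_comp _ _ qchar q_gt1) => //.
apply: linB; first by have := linXn F q 1; rewrite expn1.
exact: linZX.
Qed.

End PiSec.

From mathcomp Require Import zify.


Section LamSec.
Variable F : finFieldType.
Variable q : nat.
Hypothesis qchar : [pchar F].-nat q.
Hypothesis q_gt1 : (1 < q)%N.
Variable m : nat.
Hypothesis cardF : #|F| = (q ^ m)%N.
Variable g : nat -> F.
Variable n : nat.
Hypothesis Hind : forall c : nat -> F, (forall l, (l < n)%N -> c l ^+ q = c l) ->
     \sum_(l < n) c l * g l = 0 -> forall l, (l < n)%N -> c l = 0.

Notation lin := (@linearized F q).
Notation V j := (Fq_span q j g).
Notation PI j := (Pi q j g).

Lemma det_const k (A : 'M[{poly F}]_k) :
  (forall a b, A a b = ((A a b)`_0)%:P) ->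
  \det A = (\det (map_mx (fun p : {poly F} => p`_0) A))%:P.
Proof.
move=> H; rewrite -det_map_mx; congr (\det _); apply/matrixP => a b.
by rewrite [RHS]mxE mxE /= -H.
Qed.

Lemma lin_sign k f : lin f -> lin ((-1) ^+ k * f).
Proof. by move=> Hf; rewrite -signr_odd mulr_sign; case: ifP => _ //; apply: linN. Qed.

Lemma lin_Dmx j l : (l < j)%N -> lin (\det (Dmx q j g l)).
Proof.
case: j => [//|j] lj.
rewrite (expand_det_col _ ord_max); apply: lin_sum => t _.
have -> : Dmx q j.+1 g l t ord_max = 'X^(q ^ t).
  by rewrite mxE /= ltnn ltnNge -ltnS lj.
rewrite /cofactor det_const; last first.
  move=> a b; rewrite !mxE lift_max.
  case: ifP => _; first by rewrite coefC.
  by rewrite ltnS ltn_ord coefC.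
rewrite mulrCA; apply: lin_sign.
by rewrite mulrC mul_polyC; apply/linZ/linXn.
Qed.

Lemma lin_Lambda j r : lin (Lambda q j g r).
Proof.
apply: linZ; apply: lin_sum => l _; apply: linZ; apply: lin_Dmx; exact: ltn_ord.
Qed.

Lemma Moore_det j : (j <= n)%N -> \det (Moore q j g) != 0.
Proof.
move=> jn; apply/negP => /det0P [v vnz hv].
pose L := \sum_(t < j) v 0 t *: 'X^(q ^ t).
have LnZ : L != 0.
  apply: contraNneq vnz => L0; apply/eqP/rowP => t; rewrite mxE.
  have := congr1 (fun p : {poly F} => p`_(q ^ t)) L0; rewrite coef0 /L coef_sumMXn.
  rewrite (big_pred1 t) ?ord1 // => s /=; rewrite eqn_exp2l //.
have Llin : lin L by apply: lin_sum => t _; apply/linZ/linXn.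
have Lg : forall l, (l < j)%N -> L.[g l] = 0.
  move=> l lj; have := congr1 (fun M : 'rV[F]_j => M 0 (Ordinal lj)) hv.
  rewrite !mxE => <-; rewrite horner_sum; apply: eq_bigr => t _.
  by rewrite hornerZ hornerXn mxE.
have [Q eQ] := Pi_dvd F q g j L (fun u hu => introT rootP (lin_vanish F q qchar q_gt1 g j L Llin Lg u hu)).
have [_ sP] := Pi_lin F q qchar q_gt1 m cardF g n Hind j jn.
have : (size (PI j) <= size L)%N by apply: dvdp_leq => //; rewrite eQ dvdp_mull.
have : (size L <= (q ^ j.-1).+1)%N.
  rewrite /L; elim/big_ind: _ => [||t _].
  - by rewrite size_poly0.
  - by move=> x y hx hy; apply: leq_trans (size_polyD _ _) _; rewrite geq_max hx hy.
  apply: leq_trans (size_scale_leq _ _) _; rewrite size_polyXn ltnS leq_exp2l //.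
  by rewrite -ltnS prednK // (leq_ltn_trans _ (ltn_ord t)).
rewrite sP => h1 h2; have := leq_trans h2 h1; rewrite ltnS leq_exp2l //.
case: j {jn hv L LnZ Llin Lg eQ sP h1 h2} v vnz => [v|j _ _]; last by rewrite ltnn.
by rewrite (_ : v = 0) ?eqxx //; apply/rowP => -[].
Qed.

End LamSec.

From mathcomp Require Import zify.
From mathcomp Require Import perm.


Section LamSec2.
Variable F : finFieldType.
Variable q : nat.
Hypothesis qchar : [pchar F].-nat q.
Hypothesis q_gt1 : (1 < q)%N.
Variable m : nat.
Hypothesis cardF : #|F| = (q ^ m)%N.
Variable g : nat -> F.
Variable n : nat.
Hypothesis Hind : forall c : nat -> F, (forall l, (l < n)%N -> c l ^+ q = c l) ->
     \sum_(l < n) c l * g l = 0 -> forall l, (l < n)%N -> c l = 0.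

Notation lin := (@linearized F q).

Definition colf (j l c : nat) : nat :=
  if (c < l)%N then c else if (c.+1 < j)%N then c.+1 else l.

Definition Amx j l : 'M[F]_j := \matrix_(t < j, c < j) g (colf j l c) ^+ (q ^ t).

Lemma Amx_last j : (0 < j)%N -> Amx j j.-1 = Moore q j g.
Proof.
move=> j0; apply/matrixP => t c; rewrite !mxE /colf.
case: ifP => // h1; case: ifP => h2; first lia.
have hc := ltn_ord c; by congr (g _ ^+ _); lia.
Qed.

Lemma colf_swap j l c : (l.+1 < j)%N -> (c < j)%N ->
  colf j l c = colf j l.+1 (if c == l then j.-1 else if c == j.-1 then l else c).
Proof.
move=> h hc; rewrite /colf.
case: (eqVneq c l) => [->|ne1].
  by rewrite ltnn h; case: ifP => ?; [lia|]; case: ifP => ?; lia.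
case: (eqVneq c j.-1) => [->|ne2].
  by rewrite ltnSn; case: ifP => ?; [lia|]; case: ifP => ?; lia.
case: ifP => h1; case: ifP => h2 //; try lia.
case: ifP => h3; lia.
Qed.

Lemma Amx_swap j l (h : (l.+1 < j)%N) (lj : (l < j)%N) (jm : (j.-1 < j)%N) :
  Amx j l = xcol (Ordinal lj) (Ordinal jm) (Amx j l.+1).
Proof.
apply/matrixP => t c; rewrite !mxE (colf_swap j l c h (ltn_ord c)).
congr (g (colf _ _ _) ^+ _).
case: tpermP => [->|->|ne1 ne2] /=; first by rewrite eqxx.
  by rewrite eqxx; case: ifP => //; lia.
rewrite ifF; last by apply/negP => /eqP e; apply: ne1; apply: val_inj.
by rewrite ifF //; apply/negP => /eqP e; apply: ne2; apply: val_inj.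
Qed.

Lemma det_Amx j l : (l < j)%N -> \det (Amx j l) = (-1) ^+ (j.-1 - l) * \det (Moore q j g).
Proof.
move=> lj; move e: (j.-1 - l)%N => k.
elim: k l lj e => [|k IH] l lj e.
  have -> : l = j.-1 by lia.
  by rewrite Amx_last ?mul1r //; lia.
have h : (l.+1 < j)%N by lia.
have jm : (j.-1 < j)%N by lia.
rewrite (Amx_swap j l h lj jm) xcolE det_mulmx /tperm_mx det_perm odd_tperm.
rewrite (IH l.+1) //; last by lia.
have -> : (Ordinal lj != Ordinal jm) = true.
  by apply/negP => /eqP /(congr1 val) /=; lia.
by rewrite expr1 mulrN1 exprS mulN1r mulNr.
Qed.

Lemma eval_Dmx j l' x : (\det (Dmx q j g l')).[x] =
  \det (\matrix_(t < j, c < j)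
    (if (c < l')%N then g c ^+ (q ^ t) else if (c.+1 < j)%N then g c.+1 ^+ (q ^ t) else x ^+ (q ^ t))).
Proof.
rewrite -horner_evalE -det_map_mx; congr (\det _); apply/matrixP => t c.
rewrite mxE /= /Dmx !mxE horner_evalE; case: ifP => _; first by rewrite hornerC.
by case: ifP => _; [rewrite hornerC | rewrite hornerXn].
Qed.

Lemma Dmx_eval_same j l : (l < j)%N ->
  (\det (Dmx q j g l)).[g l] = (-1) ^+ (j.-1 - l) * \det (Moore q j g).
Proof.
move=> lj; rewrite eval_Dmx -det_Amx //; congr (\det _); apply/matrixP => t c.
by rewrite !mxE /colf; case: ifP => _ //; case: ifP.
Qed.

Lemma Dmx_eval_other j l l' : (l < j)%N -> (l' < j)%N -> l != l' ->
  (\det (Dmx q j g l')).[g l] = 0.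
Proof.
move=> lj l'j ne; rewrite eval_Dmx -det_tr.
have jm : (j.-1 < j)%N by lia.
case: (ltngtP l l') => [ll|ll|e]; last by rewrite e eqxx in ne.
  apply: (determinant_alternate (i1 := Ordinal lj) (i2 := Ordinal jm)).
    by apply/negP => /eqP /(congr1 val) /=; lia.
  move=> t; rewrite !mxE /= ll ifF; last lia.
  by rewrite ifF //; lia.
have l1 : (l.-1 < j)%N by lia.
apply: (determinant_alternate (i1 := Ordinal l1) (i2 := Ordinal jm)).
  by apply/negP => /eqP /(congr1 val) /=; lia.
move=> t; rewrite !mxE /= ifF; last lia.
rewrite ifT; last lia.
rewrite ifF; last lia.
by rewrite ifF; [rewrite prednK //; lia | lia].
Qed.

Lemma Lambda_interp j r l : (j <= n)%N -> (l < j)%N -> (Lambda q j g r).[g l] = r l.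
Proof.
move=> jn lj; rewrite /Lambda hornerZ horner_sum (bigD1 (Ordinal lj)) //= big1 ?addr0.
  rewrite hornerZ Dmx_eval_same //.
  have -> : (j - l.+1 = j.-1 - l)%N by lia.
  have dnz := Moore_det F q qchar q_gt1 m cardF g n Hind j jn.
  rewrite mulrACA -exprD addnn -signr_odd odd_double expr0 mul1r.
  by rewrite mulrCA mulVf ?mulr1.
move=> l' ne; rewrite hornerZ Dmx_eval_other ?mulr0 //.
by apply: contra ne => /eqP e; apply/eqP/val_inj; rewrite /= e.
Qed.

End LamSec2.

From mathcomp Require Import zify.


Section Core.
Variable F : finFieldType.
Variable q : nat.
Hypothesis qchar : [pchar F].-nat q.
Hypothesis q_gt1 : (1 < q)%N.
Variables g r : nat -> F.

Notation lin := (@linearized F q).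

Lemma hD f x y : lin f -> f.[x + y] = f.[x] + f.[y].
Proof. exact: horner_linD. Qed.
Lemma hN f x : lin f -> f.[- x] = - f.[x].
Proof. exact: horner_linN. Qed.
Lemma h0 f : lin f -> f.[0] = 0.
Proof. exact: horner_lin0. Qed.
Lemma cD f x y : lin f -> f \Po (x + y) = (f \Po x) + (f \Po y).
Proof. exact: comp_linD. Qed.
Lemma cN f x : lin f -> f \Po (- x) = - (f \Po x).
Proof. exact: comp_linN. Qed.
Lemma c0 f : lin f -> f \Po 0 = 0.
Proof. exact: comp_lin0. Qed.
Lemma lC f h : lin f -> lin h -> lin (f \Po h).
Proof. exact: lin_comp. Qed.

Definition ker j (w : pair2 F) : Prop :=
  lin w.1 /\ lin w.2 /\ forall l, (l < j)%N -> w.1.[g l] + w.2.[r l] = 0.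

Definition cond j (w : pair2 F) := w.1.[g j] + w.2.[r j].

Lemma E_comb a b (u v : pair2 F) x y : lin a -> lin b ->
  (addp (act a u) (act b v)).1.[x] + (addp (act a u) (act b v)).2.[y] =
  a.[u.1.[x] + u.2.[y]] + b.[v.1.[x] + v.2.[y]].
Proof.
move=> la lb; rewrite /= !hornerD !horner_comp hD // [b.[_ + _]]hD //.
by rewrite addrACA.
Qed.

Lemma ker_comb j a b u v : lin a -> lin b -> ker j u -> ker j v ->
  ker j (addp (act a u) (act b v)).
Proof.
move=> la lb [lu1 [lu2 cu]] [lv1 [lv2 cv]]; split; [|split] => /=.
- by apply: linD; apply: lC.
- by apply: linD; apply: lC.
move=> l lj; have := E_comb a b u v (g l) (r l) la lb; rewrite /= => ->.
by rewrite cu // cv // !h0 // addr0.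
Qed.

Lemma ker_ext j a b u v : lin a -> lin b -> ker j u -> ker j v ->
  a.[cond j u] + b.[cond j v] = 0 -> ker j.+1 (addp (act a u) (act b v)).
Proof.
move=> la lb ku kv hc; have [l1 [l2 c']] := ker_comb j a b u v la lb ku kv.
split; [done|split; [done|]] => l; rewrite ltnS leq_eqVlt => /orP[/eqP ->|]; last exact: c'.
by rewrite E_comb.
Qed.

Lemma ker_weak j w : ker j.+1 w -> ker j w.
Proof. by case=> l1 [l2 c]; split; [|split] => // l lj; apply: c; apply: ltnW. Qed.

Lemma Comb a b A B C D u v : lin a -> lin b ->
  addp (act a (row_comp A B u v)) (act b (row_comp C D u v)) =
  row_comp ((a \Po A) + (b \Po C)) ((a \Po B) + (b \Po D)) u v.
Proof.
move=> la lb; rewrite /row_comp /addp /act /=.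
congr (_, _); rewrite !cD // !comp_polyA !comp_polyD; by rewrite addrACA.
Qed.

Lemma act_id (u : pair2 F) v : addp (act 'X u) (act 0 v) = u.
Proof. by case: u => u1 u2; rewrite /addp /act /= !comp_polyX !comp_poly0 !addr0. Qed.

Lemma act_id' (u : pair2 F) v : addp (act 0 u) (act 'X v) = v.
Proof. by case: v => v1 v2; rewrite /addp /act /= !comp_polyX !comp_poly0 !add0r. Qed.

Lemma basis_in S (u v : pair2 F) : is_basis2 q S u v -> S u /\ S v.
Proof.
case=> [Hs _]; split; apply/Hs.
  by exists 'X, 0; split; [exact: linX|split; [exact: lin0|by rewrite act_id]].
exists 0, 'X; split; [exact: lin0|split; [exact: linX|]].
by rewrite act_id'.
Qed.

Lemma basis_ext (S S' : pair2 F -> Prop) u v : is_basis2 q S u v ->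
  (forall w, S w <-> S' w) -> is_basis2 q S' u v.
Proof. by case=> Hs Hi HS; split => // w; rewrite -HS. Qed.

Lemma basis_swap S (u v : pair2 F) : is_basis2 q S u v -> is_basis2 q S v u.
Proof.
have sw : forall a b (x y : pair2 F), addp (act a x) (act b y) = addp (act b y) (act a x).
  by move=> a b x y; rewrite /addp; congr (_, _); rewrite addrC.
case=> Hs Hi; split.
  move=> w; rewrite Hs; split; case=> a [b [la [lb ->]]]; exists b, a; by rewrite sw.
by move=> a b la lb; rewrite sw => /(Hi _ _ lb la) [-> ->].
Qed.

Lemma basis_neg S (u v : pair2 F) : is_basis2 q S u v -> is_basis2 q S u (act (- 'X) v).
Proof.
have lnX : lin (- 'X) by apply/linN/linX.
have XX : (- 'X) \Po (- 'X) = 'X :> {poly F} by rewrite -[X in X \Po _]scaleN1r compZX scaleN1r opprK.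
have aa : forall b (y : pair2 F), act b (act (- 'X) y) = act (b \Po (- 'X)) y.
  by move=> b y; rewrite /act /= !comp_polyA.
case=> Hs Hi; split.
  move=> w; rewrite Hs; split; case=> a [b [la [lb ->]]].
    exists a, (b \Po (- 'X)); split => //; split; first exact: lC.
    by rewrite aa -comp_polyA XX comp_polyXr.
  by exists a, (b \Po (- 'X)); split => //; split; [exact: lC| rewrite aa].
move=> a b la lb; rewrite aa => /(Hi _ _ la (lC _ _ lb lnX)) [-> e].
split => //; by rewrite -[b]comp_polyXr -XX comp_polyA e comp_poly0.
Qed.

Lemma comp_inj_T (a T : {poly F}) : (1 < size T)%N -> lead_coef T = 1 -> a \Po T = 0 -> a = 0.
Proof.
move=> sT lT e; apply/eqP; rewrite -lead_coef_eq0.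
by have := lead_coef_comp a sT; rewrite e lead_coef0 lT expr1n mulr1 => <-.
Qed.

Section Case1.
Variable j : nat.
Variables u v : pair2 F.
Hypothesis Hb : is_basis2 q (ker j) u v.
Let G := cond j u.
Let Dl := cond j v.
Hypothesis Gnz : G != 0.
Let T := 'X^q - (G ^+ (q - 1)) *: 'X.

Lemma T_lin : lin T.
Proof. by apply: linB; [have := linXn F q 1; rewrite expn1 | exact: linZX]. Qed.

Lemma T_size : size T = (q ^ 1).+1.
Proof.
by rewrite expn1 size_addl size_polyXn // size_opp (leq_ltn_trans (size_scale_leq _ _)) // size_polyX.
Qed.

Lemma T_lead : lead_coef T = 1.
Proof.
rewrite lead_coefDl ?lead_coefXn // size_polyXn size_opp.
by rewrite (leq_ltn_trans (size_scale_leq _ _)) // size_polyX.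
Qed.

Lemma T_root : T.[G] = 0.
Proof.
rewrite !hornerE.
have -> : G ^+ q = G ^+ (q - 1) * G by rewrite -exprSr subn1 prednK // ltnW.
by rewrite subrr.
Qed.

Lemma case1 : is_basis2 q (ker j.+1) (row_comp T 0 u v)
   (row_comp (Dl *: 'X) (- (G *: 'X)) u v).
Proof.
have [ku kv] := basis_in _ _ _ Hb.
case: Hb => Hs Hi.
have lT := T_lin.
have lDX : lin (Dl *: 'X) by exact: linZX.
have lGX : lin (- (G *: 'X)) by apply/linN/linZX.
split.
  move=> w; split.
    move=> kw; have := Hs w; case=> /(_ (ker_weak _ _ kw)) [a [b [la [lb ew]]]] _.
    have cw : a.[G] + b.[Dl] = 0.
      by case: kw => _ [_ /(_ j (ltnSn j))]; rewrite ew E_comb.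
    pose h := a - (b \Po ((- (G^-1 * Dl)) *: 'X)).
    have lh : lin h by apply: linB => //; apply: lC => //; exact: linZX.
    have [a' [rho [la' [lrho [eh srho]]]]] := lin_div F q qchar q_gt1 T 1 lT T_lead T_size h lh.
    have hG : h.[G] = 0.
      rewrite /h hornerD hornerN horner_comp hornerZ hornerX mulNr mulrAC mulVf // mul1r.
      by rewrite hN // opprK.
    have rho0 : rho = 0.
      rewrite expn1 in srho.
      have : rho.[G] = 0.
        by move: hG; rewrite eh hornerD horner_comp T_root h0 // add0r.
      rewrite (lin_small F q q_gt1 rho lrho srho) hornerZ hornerX => /eqP.
      rewrite mulf_eq0 (negPf Gnz) orbF => /eqP r1.
      by rewrite r1 scale0r.
    exists a', (b \Po ((- G^-1) *: 'X)); split => //; split; first by apply: lC => //; exact: linZX.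
    rewrite Comb //; last by apply: lC => //; exact: linZX.
    rewrite ew; congr row_comp.
      rewrite -comp_polyA compZX scalerA mulNr.
      by rewrite -(addr0 (a' \Po T)) -rho0 -eh /h subrK.
    rewrite c0 // add0r -comp_polyA compZX scalerN scalerA mulNr mulVf //.
    by rewrite scaleN1r opprK comp_polyXr.
  case=> a [b [la [lb ->]]]; rewrite Comb //.
  apply: ker_ext => //.
  - by apply: linD; apply: lC => //; exact: lin0.
  - by apply: linD; apply: lC => //; exact: lin0.
  rewrite -/G -/Dl !hornerD !horner_comp T_root !hornerN !hornerZ hornerX !h0 // !add0r.
  by rewrite hornerC hornerX h0 // add0r hN // mulrC subrr.
move=> a b la lb; rewrite Comb // => /(Hi _ _ (linD _ _ _ _ (lC _ _ la lT) (lC _ _ lb lDX)) (linD _ _ _ _ (lC _ _ la (lin0 F q)) (lC _ _ lb lGX))).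
rewrite c0 // add0r => -[eA eB].
have b0 : b = 0.
  have : (b \Po - (G *: 'X)) \Po ((- G^-1) *: 'X) = 0 by rewrite eB comp_poly0.
  rewrite -scaleNr -comp_polyA compZX scalerA mulrNN mulfV // scale1r.
  by rewrite comp_polyXr.
split => //; move: eA; rewrite b0 comp_poly0 addr0.
apply: comp_inj_T; last exact: T_lead.
by rewrite T_size ltnS expn_gt0 ltnW.
Qed.

End Case1.
End Core.

Lemma rc_swap (F : finFieldType) (A B : {poly F}) u v : row_comp A B u v = row_comp B A v u.
Proof. by rewrite /row_comp /addp; congr (_, _); rewrite addrC. Qed.

Lemma rc_neg (F : finFieldType) (c d : F) (u v : pair2 F) :
  act (- 'X) (row_comp (c *: 'X) (- (d *: 'X)) v u) = row_comp (d *: 'X) (- (c *: 'X)) u v.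
Proof.
have nX : forall p : {poly F}, (- 'X) \Po p = - p.
  by move=> p; rewrite -scaleN1r compZX scaleN1r.
have nZ : forall (e : F) (p : {poly F}), (- (e *: 'X)) \Po p = (- e) *: p.
  by move=> e p; rewrite -scaleNr compZX.
rewrite /row_comp /addp /act /=; congr (_, _);
by rewrite nX !nZ !compZX !scaleNr opprD opprK addrC.
Qed.

From mathcomp Require Import zify.


Section KerSec.
Variable F : finFieldType.
Variable q : nat.
Hypothesis qchar : [pchar F].-nat q.
Hypothesis q_gt1 : (1 < q)%N.
Variable m : nat.
Hypothesis cardF : #|F| = (q ^ m)%N.
Variables g r : nat -> F.
Variable n : nat.
Hypothesis Hind : forall c : nat -> F, (forall l, (l < n)%N -> c l ^+ q = c l) ->
     \sum_(l < n) c l * g l = 0 -> forall l, (l < n)%N -> c l = 0.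

Notation lin := (@linearized F q).
Notation V j := (Fq_span q j g).
Notation PI j := (Pi q j g).

Lemma g_in_span j l : (l < j)%N -> g l \in V j.
Proof.
move=> lj; apply/spanP; exists (fun l' => (l' == l)%:R); split.
  move=> l' _; case: (l' == l); first by rewrite expr1n.
  by rewrite expr0n gtn_eqF // ltnW.
rewrite (bigD1 (Ordinal lj)) //= eqxx mul1r big1 ?addr0 // => l' ne.
rewrite (_ : (val l' == l) = false) ?mul0r //; apply/negbTE.
by apply: contra ne => /eqP e; apply/eqP/val_inj.
Qed.

Lemma K1 j w : (j <= n)%N -> interp_module q j g r w <-> ker F q g r j w.
Proof.
move=> jn; have [lPi sPi] := Pi_lin F q qchar q_gt1 m cardF g n Hind j jn.
have lL := lin_Lambda F q g j r.
split.
  case=> be [ga [lbe [lga ->]]]; rewrite /addp /act /= (c0 F q) // add0r comp_polyXr.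
  split; [|split] => //.
    by apply: linD; apply: lC => //; apply: linN.
  move=> l lj /=; rewrite hornerD !horner_comp hornerN.
  rewrite (Lambda_interp F q qchar q_gt1 m cardF g n Hind j r l jn lj).
  have -> : (PI j).[g l] = 0 by apply/rootP; rewrite root_Pi g_in_span.
  by rewrite (h0 F q) // add0r (hN F q) // addNr.
case=> l1 [l2 cw].
pose h := w.1 + (w.2 \Po Lambda q j g r).
have lh : lin h by apply: linD => //; apply: lC.
have hg : forall l, (l < j)%N -> h.[g l] = 0.
  move=> l lj; rewrite /h hornerD horner_comp.
  by rewrite (Lambda_interp F q qchar q_gt1 m cardF g n Hind j r l jn lj) cw.
have [be [rho [lbe [lrho [eh srho]]]]] :=
  lin_div F q qchar q_gt1 (PI j) j lPi (monicP (Pi_monic F q g j)) sPi h lh.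
have rho0 : rho = 0.
  have rr : forall u, u \in V j -> root rho u.
    move=> u hu; apply/rootP.
    have : h.[u] = 0 by apply: (lin_vanish F q qchar q_gt1 g j h lh hg u hu).
    rewrite eh hornerD horner_comp.
    have -> : (PI j).[u] = 0 by apply/rootP; rewrite root_Pi.
    by rewrite (h0 F q) // add0r.
  have [Q eQ] := Pi_dvd F q g j rho rr.
  apply/eqP; apply: contraT => nz.
  have := dvdp_leq nz (introT (dvdpP _ _) (ex_intro _ Q eQ)).
  by rewrite sPi ltnNge srho.
exists be, w.2; split => //; split => //.
rewrite /addp /act /= (c0 F q) // add0r comp_polyXr (cN F q) //.
apply: injective_projections => //=.
by move: eh; rewrite rho0 addr0 /h => <-; rewrite addrK.
Qed.

End KerSec.

Theorem lemma26 (F : finFieldType) (q m n : nat) (g r : nat -> F)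
  (P K N D : {poly F}) (i : nat) :
  (exists p k : nat, prime p /\ (0 < k)%N /\ q = (p ^ k)%N) ->
  (1 <= m)%N ->
  #|F| = (q ^ m)%N ->
  (* g_1, ..., g_n linearly independent over F_q = {c | c^q = c} *)
  (forall c : nat -> F, (forall l, (l < n)%N -> c l ^+ q = c l) ->
     \sum_(l < n) c l * g l = 0 -> forall l, (l < n)%N -> c l = 0) ->
  (1 <= i <= n)%N ->
  linearized q P -> linearized q K -> linearized q N -> linearized q D ->
  is_basis2 q (interp_module q i.-1 g r) (P, - K) (N, - D) ->
  let Gamma := P.[g i.-1] - K.[r i.-1] in
  let Delta := N.[g i.-1] - D.[r i.-1] in
  (Gamma != 0 ->
     is_basis2 q (interp_module q i g r)
       (row_comp ('X ^+ q - (Gamma ^+ (q - 1)) *: 'X) 0 (P, - K) (N, - D))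
       (row_comp (Delta *: 'X) (- (Gamma *: 'X)) (P, - K) (N, - D))) /\
  (Delta != 0 ->
     is_basis2 q (interp_module q i g r)
       (row_comp (Delta *: 'X) (- (Gamma *: 'X)) (P, - K) (N, - D))
       (row_comp 0 ('X ^+ q - (Delta ^+ (q - 1)) *: 'X) (P, - K) (N, - D))).
Proof.
move=> [p [k [pp [k0 eq]]]] m1 cardF Hind /andP[i1 iN] lP lK lN lD Hb Gamma Delta.
have qchar : [pchar F].-nat q.
  rewrite eq pnatX (pnatE _ pp) orbC; apply/orP; right.
  by apply: (card_finPcharP (n := (k * m)%N)) => //; rewrite cardF eq expnM.
have q_gt1 : (1 < q)%N by rewrite eq -{1}(expn0 p) ltn_exp2l // prime_gt1.
case: i i1 iN Hb @Gamma @Delta => // i' _ iN Hb Gamma Delta /=.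
have Hb' := basis_ext F q _ _ _ _ Hb (fun w => K1 F q qchar q_gt1 m cardF g r n Hind i' w (ltnW iN)).
have eG : Gamma = cond F g r i' (P, - K) by rewrite /Gamma /cond /= hornerN.
have eD : Delta = cond F g r i' (N, - D) by rewrite /Delta /cond /= hornerN.
have HK : forall w, ker F q g r i'.+1 w <-> interp_module q i'.+1 g r w.
  by move=> w; apply: iff_sym; exact: (K1 F q qchar q_gt1 m cardF g r n Hind i'.+1 w iN).
split => nz.
  apply: (basis_ext F q _ _ _ _ _ HK); rewrite eG eD.
  by apply: case1 => //; rewrite -eG.
apply: (basis_ext F q _ _ _ _ _ HK); rewrite eG eD.
have := case1 F q qchar q_gt1 g r i' (N, - D) (P, - K) (basis_swap F q _ _ _ Hb') _.
rewrite -eD => /(_ nz) /(basis_neg F q qchar q_gt1) /(basis_swap F q).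
by rewrite rc_neg (rc_swap F _ 0).
Qed.
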